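(* Let $0<\lambda<\frac{5-\sqrt{21}}{2}$ and let $K$ be the attractor of the IFS $f_1(x)=\lambda x$, $f_2(x)=\lambda x+2\lambda$, $f_3(x)=\lambda x+3\lambda-\lambda^2$, $f_4(x)=\lambda x+1-\lambda$. Then for every $k\ge1$, $$\dim_H(U_{2^k})=\dim_H(U_1)=\frac{\log(2+\sqrt2)}{-\log\lambda}.$$ Moreover $U_i=\emptyset$ for every positive integer $i$ that is not a power of $2$, and $U_{\aleph_0}=\emptyset$.
   Context: A coding of $x\in K$ is a sequence $(i_n)\in\{1,2,3,4\}^{\mathbb{N}}$ with $x=\lim_{n\to\infty}f_{i_1}\circ\cdots\circ f_{i_n}(0)$. For $k\in\{1,2,\dots\}\cup\{\aleph_0\}$, $U_k$ denotes the set of $x\in K$ having exactly $k$ distinct codings. *)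

(* Defs.v *)
From Stdlib Require Import Reals Lra List.
Open Scope R_scope.

Inductive idx : Set := I1 | I2 | I3 | I4.

Definition ifs (lam : R) (i : idx) (x : R) : R :=
  match i with
  | I1 => lam * x
  | I2 => lam * x + 2 * lam
  | I3 => lam * x + 3 * lam - lam ^ 2
  | I4 => lam * x + 1 - lam
  end.

(* compose lam c n x = f_{c 0} o f_{c 1} o ... o f_{c (n-1)} (x)
   (the paper indexes codings from 1; we index from 0). *)
Fixpoint compose (lam : R) (c : nat -> idx) (n : nat) (x : R) : R :=
  match n with
  | O => x
  | S m => compose lam c m (ifs lam (c m) x)
  end.

Definition is_coding (lam x : R) (c : nat -> idx) : Prop :=
  Un_cv (fun n => compose lam c n 0) x.

Definition attractor (lam : R) (x : R) : Prop := exists c, is_coding lam x c.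

Definition U (lam : R) (k : nat) (x : R) : Prop :=
  attractor lam x /\
  exists l : list (nat -> idx),
    length l = k /\ NoDup l /\ (forall c, is_coding lam x c <-> In c l).

Definition U_aleph0 (lam : R) (x : R) : Prop :=
  attractor lam x /\
  exists e : nat -> (nat -> idx),
    (forall m n, e m = e n -> m = n) /\
    (forall c, is_coding lam x c <-> exists n, e n = c).

(* Diameters are represented by upper bounds r_n > 0 (diam E_n <= r_n <= delta);
   for s > 0 this gives the same infimum. *)
Definition hausdorff_null (s : R) (A : R -> Prop) : Prop :=
  forall delta eps : R, 0 < delta -> 0 < eps ->
  exists (E : nat -> R -> Prop) (r : nat -> R) (l : R),
    (forall x, A x -> exists n, E n x) /\
    (forall n, 0 < r n <= delta) /\
    (forall n x y, E n x -> E n y -> Rabs (x - y) <= r n) /\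
    infinite_sum (fun n => Rpower (r n) s) l /\ l < eps.

Definition is_glb (P : R -> Prop) (m : R) : Prop :=
  (forall s, P s -> m <= s) /\ (forall m', (forall s, P s -> m' <= s) -> m' <= m).

Definition hausdorff_dim (A : R -> Prop) (d : R) : Prop :=
  is_glb (fun s => 0 < s /\ hausdorff_null s A) d.

(* Main.v *)
Require Import Defs.
From Stdlib Require Import Reals Lra Lia List Classical ClassicalEpsilon FunctionalExtensionality.
Open Scope R_scope.

Lemma lam_facts (lam : R) : 0 < lam -> lam < (5 - sqrt 21) / 2 ->
  lam < 1/4 /\ 0 < 1 - 5*lam + lam^2.
Proof.
  intros H0 H1.
  assert (Hs : 0 <= sqrt 21) by apply sqrt_pos.
  assert (Hss : sqrt 21 * sqrt 21 = 21) by (apply sqrt_sqrt; lra).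
  assert (Ha : sqrt 21 < 5 - 2*lam) by lra.
  assert (Hb : 21 < (5 - 2*lam)*(5-2*lam)) by nra.
  split; nra.
Qed.

Lemma cv_shift1 (u : nat -> R) l : Un_cv u l -> Un_cv (fun n => u (S n)) l.
Proof. intros H e He. destruct (H e He) as [N HN]. exists N. intros n Hn. apply HN. lia. Qed.

Lemma cv_const (l : R) : Un_cv (fun _ => l) l.
Proof. intros e He. exists O. intros. unfold R_dist. rewrite Rminus_diag, Rabs_R0. lra. Qed.

Lemma cv_le (u : nat -> R) l M : Un_cv u l -> (forall n, u n <= M) -> l <= M.
Proof.
  intros H HM. destruct (Rle_lt_dec l M) as [h|h]; [exact h|].
  destruct (H (l - M)) as [N HN]; [lra|]. specialize (HN N (le_n _)). specialize (HM N).
  unfold R_dist in HN. apply Rabs_def2 in HN. lra.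
Qed.

Lemma cv_ge (u : nat -> R) l M : Un_cv u l -> (forall n, M <= u n) -> M <= l.
Proof.
  intros H HM. destruct (Rle_lt_dec M l) as [h|h]; [exact h|].
  destruct (H (M - l)) as [N HN]; [lra|]. specialize (HN N (le_n _)). specialize (HM N).
  unfold R_dist in HN. apply Rabs_def2 in HN. lra.
Qed.

Lemma pow_le1 (x : R) n : 0 <= x <= 1 -> 0 <= x ^ n <= 1.
Proof. intros H. induction n; simpl; nra. Qed.

Lemma pow_pos' (x : R) n : 0 < x -> 0 < x ^ n.
Proof. intros; apply pow_lt; auto. Qed.

Definition badb (a b : idx) : bool :=
  match a, b with I2, I4 => true | I3, I1 => true | _, _ => false end.

Lemma idx_eq_dec (a b : idx) : {a = b} + {a <> b}.
Proof. decide equality. Defined.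

Lemma least_diff (c c' : nat -> idx) : (exists n, c n <> c' n) ->
  exists p, c p <> c' p /\ forall q, (q < p)%nat -> c q = c' q.
Proof.
  intros [n Hn]. induction n as [n IH] using (well_founded_induction Wf_nat.lt_wf).
  destruct (classic (exists q, (q < n)%nat /\ c q <> c' q)) as [[q [Hq1 Hq2]]|Hno].
  - exact (IH q Hq1 Hq2).
  - exists n. split; auto. intros q Hq. destruct (idx_eq_dec (c q) (c' q)); auto.
    exfalso; apply Hno; eauto.
Qed.

Lemma least_nat (P : nat -> Prop) : (exists n, P n) -> exists n, P n /\ forall q, (q < n)%nat -> ~ P q.
Proof.
  intros [n Hn]. induction n as [n IH] using (well_founded_induction Wf_nat.lt_wf).
  destruct (classic (exists q, (q < n)%nat /\ P q)) as [[q [Hq1 Hq2]]|Hno].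
  - exact (IH q Hq1 Hq2).
  - exists n. split; auto. intros q Hq HP. apply Hno; eauto.
Qed.

Definition shift (c : nat -> idx) : nat -> idx := fun n => c (S n).
Definition shiftn (m : nat) (c : nat -> idx) : nat -> idx := fun n => c (m + n)%nat.

Definition pre (n0 : nat) (f : nat -> idx) (a b : idx) (t : nat -> idx) : nat -> idx :=
  fun n => if Nat.ltb n n0 then f n else if Nat.eqb n n0 then a else if Nat.eqb n (S n0) then b
           else t (n - S (S n0))%nat.

Lemma pre_shift n0 f a b t : shiftn (S (S n0)) (pre n0 f a b t) = t.
Proof.
  apply functional_extensionality. intro n. unfold shiftn, pre.
  destruct (Nat.ltb_spec (S (S n0) + n)%nat n0); [lia|].
  destruct (Nat.eqb_spec (S (S n0) + n)%nat n0); [lia|].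
  destruct (Nat.eqb_spec (S (S n0) + n)%nat (S n0)); [lia|]. f_equal. lia.
Qed.

Lemma pre_lt n0 f a b t n : (n < n0)%nat -> pre n0 f a b t n = f n.
Proof. intro H. unfold pre. destruct (Nat.ltb_spec n n0); [auto|lia]. Qed.
Lemma pre_n0 n0 f a b t : pre n0 f a b t n0 = a.
Proof. unfold pre. destruct (Nat.ltb_spec n0 n0); [lia|]. rewrite Nat.eqb_refl. auto. Qed.
Lemma pre_n1 n0 f a b t : pre n0 f a b t (S n0) = b.
Proof. unfold pre. destruct (Nat.ltb_spec (S n0) n0); [lia|]. destruct (Nat.eqb_spec (S n0) n0); [lia|].
  rewrite Nat.eqb_refl. auto. Qed.

Lemma pre_eta n0 d : d = pre n0 d (d n0) (d (S n0)) (shiftn (S (S n0)) d).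
Proof.
  apply functional_extensionality. intro n. unfold pre, shiftn.
  destruct (Nat.ltb_spec n n0); auto. destruct (Nat.eqb_spec n n0); [subst; auto|].
  destruct (Nat.eqb_spec n (S n0)); [subst; auto|]. f_equal. lia.
Qed.

Lemma NoDup_map_inj {A B : Type} (f : A -> B) (l : list A) : NoDup l ->
  (forall a b, In a l -> In b l -> f a = f b -> a = b) -> NoDup (map f l).
Proof.
  induction l as [|a l IH]; intros Hn Hi; simpl; constructor.
  - intro Hin. apply in_map_iff in Hin. destruct Hin as [b [Hb Hbl]].
    inversion Hn; subst. assert (b = a) by (apply Hi; simpl; auto). subst. contradiction.
  - inversion Hn; subst. apply IH; auto. intros; apply Hi; simpl; auto.
Qed.

Lemma NoDup_same_length {A : Type} (l l' : list A) : NoDup l -> NoDup l' ->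
  (forall a, In a l <-> In a l') -> length l = length l'.
Proof.
  intros H1 H2 H. apply Nat.le_antisymm; apply NoDup_incl_length; auto; intros a Ha; apply H; auto.
Qed.

Definition isI2 (a : idx) : bool := match a with I2 => true | _ => false end.

Definition glue (len : nat) (w : nat -> idx) (t : nat -> idx) : nat -> idx :=
  fun n => if Nat.ltb n len then w n else t (n - len)%nat.

Lemma pre_indep n0 f a b t t' k : (k < S (S n0))%nat -> pre n0 f a b t k = pre n0 f a b t' k.
Proof.
  intro H. unfold pre. destruct (Nat.ltb_spec k n0); auto. destruct (Nat.eqb_spec k n0); auto.
  destruct (Nat.eqb_spec k (S n0)); auto. lia.
Qed.

Lemma glue_glue len w n0 f a b t :
  glue (len + S (S n0)) (glue len w (pre n0 f a b (fun _ => I1))) t = glue len w (pre n0 f a b t).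
Proof.
  apply functional_extensionality. intro n. unfold glue.
  destruct (Nat.ltb_spec n (len + S (S n0))); destruct (Nat.ltb_spec n len); auto; try lia.
  - apply pre_indep. lia.
  - unfold pre. destruct (Nat.ltb_spec (n - len) n0); [lia|]. destruct (Nat.eqb_spec (n - len) n0); [lia|].
    destruct (Nat.eqb_spec (n - len) (S n0)); [lia|]. f_equal. lia.
Qed.

Lemma pow_mono_le (x : R) m n : 0 <= x <= 1 -> (m <= n)%nat -> x ^ n <= x ^ m.
Proof.
  intros Hx Hmn. replace n with (m + (n - m))%nat by lia. rewrite pow_add.
  pose proof (pow_le1 x (n - m) Hx). pose proof (pow_le1 x m Hx). nra.
Qed.


Lemma Rpower_pos (a b : R) : 0 < Rpower a b.
Proof. unfold Rpower. apply exp_pos. Qed.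


Lemma Rpower_root (a s : R) : 0 < a -> 0 < s -> Rpower (Rpower a (/ s)) s = a.
Proof. intros. rewrite Rpower_mult. rewrite Rinv_l by lra. apply Rpower_1; auto. Qed.

Lemma Rpower_root' (a s : R) : 0 < a -> 0 < s -> Rpower (Rpower a s) (/ s) = a.
Proof. intros. rewrite Rpower_mult. rewrite Rinv_r by lra. apply Rpower_1; auto. Qed.

Lemma sum_b (L : nat) (T : R) N :
  sum_f_R0 (fun j => if Nat.ltb j L then T else 0) N = INR (Nat.min (S N) L) * T.
Proof.
  induction N.
  - simpl sum_f_R0. destruct L; simpl; ring.
  - rewrite tech5, IHN. destruct (Nat.ltb_spec (S N) L).
    + rewrite !Nat.min_l by lia. rewrite (S_INR (S N)). ring.
    + rewrite !Nat.min_r by lia. ring.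
Qed.

Lemma sum_c (eta : R) N : sum_f_R0 (fun j => eta * (/2) ^ (S j)) N = eta * (1 - (/2) ^ (S N)).
Proof.
  induction N.
  - simpl. lra.
  - rewrite tech5, IHN. change ((/2) ^ (S (S N))) with (/2 * (/2) ^ (S N)). lra.
Qed.

Lemma finite_cover_null (s : R) (A : R -> Prop) : 0 < s ->
  (forall delta eps, 0 < delta -> 0 < eps -> exists (F : list (R -> Prop)) (r0 : R),
     0 < r0 <= delta /\ (forall G z z', In G F -> G z -> G z' -> Rabs (z - z') <= r0) /\
     (forall x, A x -> exists G, In G F /\ G x) /\ INR (length F) * Rpower r0 s < eps) ->
  hausdorff_null s A.
Proof.
  intros Hs H delta eps Hd He.
  destruct (H delta (eps / 2) Hd ltac:(lra)) as [F [r0 [Hr0 [Hdiam [Hcov Hsum]]]]].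
  set (L := length F). set (T := Rpower r0 s).
  set (eta := Rmin (eps / 4) (Rpower delta s)).
  assert (Heta : 0 < eta) by (unfold eta; apply Rmin_glb_lt; [lra| apply Rpower_pos]).
  assert (Heta2 : eta <= eps / 4) by apply Rmin_l.
  assert (Heta3 : eta <= Rpower delta s) by apply Rmin_r.
  set (r := fun j => if Nat.ltb j L then r0 else Rpower (eta * (/2) ^ (S j)) (/ s)).
  assert (Hpow : forall j, 0 < (/2) ^ j <= 1).
  { intro j. split; [apply pow_lt; lra|]. induction j; simpl; lra. }
  assert (Hrs : forall j, Rpower (r j) s = if Nat.ltb j L then T else eta * (/2) ^ (S j)).
  { intro j. unfold r. destruct (Nat.ltb j L); auto. apply Rpower_root; auto.
    pose proof (Hpow (S j)). nra. }
  exists (fun j z => exists G, nth_error F j = Some G /\ G z), r.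
  assert (Hgrow : Un_growing (sum_f_R0 (fun j => Rpower (r j) s))).
  { intro n. simpl. pose proof (Rpower_pos (r (S n)) s). lra. }
  assert (Hbound : forall N, sum_f_R0 (fun j => Rpower (r j) s) N <= INR L * T + eta).
  { intro N. eapply Rle_trans.
    - apply (sum_Rle _ (fun j => (if Nat.ltb j L then T else 0) + eta * (/2) ^ (S j))).
      intros j _. rewrite Hrs. pose proof (Hpow (S j)). assert (0 < T) by apply Rpower_pos.
      destruct (Nat.ltb j L); nra.
    - rewrite sum_plus, sum_b, sum_c. pose proof (Hpow (S N)).
      assert (INR (Nat.min (S N) L) <= INR L) by (apply le_INR; lia).
      assert (0 < T) by apply Rpower_pos. nra. }
  destruct (growing_cv _ Hgrow) as [l Hl].
  { exists (INR L * T + eta). intros x [i ->]. apply Hbound. }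
  exists l. split; [|split; [|split; [|split]]].
  - intros x Ax. destruct (Hcov x Ax) as [G [HG HGx]]. destruct (In_nth_error F G HG) as [j Hj].
    exists j, G. auto.
  - intro n. unfold r. destruct (Nat.ltb_spec n L); [lra|]. split; [apply Rpower_pos|].
    rewrite <- (Rpower_root' delta s) by lra. apply Rle_Rpower_l.
    + left; apply Rinv_0_lt_compat; lra.
    + pose proof (Hpow (S n)). split; [nra|]. nra.
  - intros n z z' [G [HG Hz]] [G' [HG' Hz']]. rewrite HG in HG'. injection HG' as <-.
    assert (n < L)%nat. { apply nth_error_Some. rewrite HG. discriminate. }
    unfold r. destruct (Nat.ltb_spec n L); [|lia]. eapply Hdiam; eauto. eapply nth_error_In; eauto.
  - exact Hl.
  - assert (l <= INR L * T + eta) by (eapply (cv_le _ _ _ Hl); auto). unfold L, T in *. lra.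
Qed.

Fixpoint allw (n : nat) : list (list idx) :=
  match n with O => nil :: nil | S n => flat_map (fun a => map (cons a) (allw n)) (I1 :: I2 :: I3 :: I4 :: nil) end.

Lemma allw_in n w : length w = n -> In w (allw n).
Proof.
  revert w. induction n; intros w Hw.
  - destruct w; [left; auto| discriminate].
  - destruct w as [|a w]; [discriminate|]. simpl in Hw. injection Hw as Hw.
    change (allw (S n)) with (flat_map (fun a => map (cons a) (allw n)) (I1 :: I2 :: I3 :: I4 :: nil)).
    apply in_flat_map. exists a. split; [destruct a; simpl; tauto|]. apply in_map. auto.
Qed.

Lemma allw_len n w : In w (allw n) -> length w = n.
Proof.
  revert w. induction n; intros w Hw.
  - destruct Hw as [<-|[]]. auto.
  - change (allw (S n)) with (flat_map (fun a => map (cons a) (allw n)) (I1 :: I2 :: I3 :: I4 :: nil)) in Hw.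
    apply in_flat_map in Hw. destruct Hw as [a [_ Hw]]. apply in_map_iff in Hw.
    destruct Hw as [w' [<- Hw']]. simpl. f_equal. auto.
Qed.

Fixpoint badw (w : list idx) : nat :=
  match w with
  | a :: t => match t with b :: _ => ((if badb a b then 1 else 0) + badw t)%nat | nil => O end
  | nil => O
  end.

Lemma badw_seq c j n : badw (map c (seq j (S n))) = length (filter (fun m => badb (c m) (c (S m))) (seq j n)).
Proof.
  revert j. induction n; intro j. reflexivity.
  specialize (IHn (S j)).
  change (badw (map c (seq j (S (S n))))) with
    ((if badb (c j) (c (S j)) then 1 else 0) + badw (map c (seq (S j) (S n))))%nat.
  rewrite IHn. change (seq j (S n)) with (j :: seq (S j) n). simpl filter.
  destruct (badb (c j) (c (S j))); reflexivity.
Qed.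

Definition sumL (f : list idx -> R) (l : list (list idx)) : R := fold_right (fun w acc => f w + acc) 0 l.

Lemma sumL_app f l l' : sumL f (l ++ l') = sumL f l + sumL f l'.
Proof. induction l; simpl. ring. unfold sumL in *. simpl. rewrite IHl. ring. Qed.

Lemma sumL_map f g l : sumL f (map g l) = sumL (fun x => f (g x)) l.
Proof. induction l; simpl; auto. unfold sumL in *; simpl; rewrite IHl; auto. Qed.

Lemma sumL_scale c f l : sumL (fun w => c * f w) l = c * sumL f l.
Proof. induction l; unfold sumL in *; simpl. ring. rewrite IHl. ring. Qed.

Lemma sumL_le f g l : (forall w, f w <= g w) -> sumL f l <= sumL g l.
Proof. intro H. induction l; unfold sumL in *; simpl. lra. specialize (H a). lra. Qed.

Lemma sumL_ext f g l : (forall w, f w = g w) -> sumL f l = sumL g l.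
Proof. intro H. induction l; unfold sumL in *; simpl. auto. rewrite H, IHl. auto. Qed.

Lemma sumL_nonneg f l : (forall w, 0 <= f w) -> 0 <= sumL f l.
Proof. intro H. induction l; unfold sumL in *; simpl. lra. specialize (H a). lra. Qed.

Lemma count_le (p : list idx -> bool) g l : (forall w, 0 <= g w) -> (forall w, p w = true -> 1 <= g w) ->
  INR (length (filter p l)) <= sumL g l.
Proof.
  intros H0 H1. induction l; simpl. lra. unfold sumL in *. simpl.
  destruct (p a) eqn:E; simpl length.
  - rewrite S_INR. specialize (H1 a E). lra.
  - specialize (H0 a). lra.
Qed.

Lemma sumL_allwS f n : sumL f (allw (S n)) =
  sumL (fun w => f (I1 :: w)) (allw n) + sumL (fun w => f (I2 :: w)) (allw n) +
  sumL (fun w => f (I3 :: w)) (allw n) + sumL (fun w => f (I4 :: w)) (allw n).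
Proof.
  change (allw (S n)) with (flat_map (fun a => map (cons a) (allw n)) (I1 :: I2 :: I3 :: I4 :: nil)).
  simpl flat_map. rewrite !sumL_app, !sumL_map. unfold sumL at 5. simpl. ring.
Qed.

Definition uu (rho : R) (a : idx) : R := match a with I1 | I4 => 2 | _ => rho - 2 end.

Lemma G_bound (eps rho : R) : 0 < eps <= 1 -> 3 <= rho -> 2 + 2 * eps <= (rho - 2) ^ 2 ->
  forall n a, sumL (fun w => eps ^ badw (a :: w)) (allw n) <= rho ^ n * uu rho a.
Proof.
  intros He Hr Hk n. induction n; intro a.
  - simpl. unfold sumL. simpl. destruct a; simpl; lra.
  - rewrite sumL_allwS.
    assert (ST : forall b, sumL (fun w => eps ^ badw (a :: b :: w)) (allw n) =
                  eps ^ (if badb a b then 1 else 0) * sumL (fun w => eps ^ badw (b :: w)) (allw n)).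
    { intro b. rewrite <- sumL_scale. apply sumL_ext. intro w. simpl badw. rewrite pow_add. auto. }
    rewrite !ST.
    assert (N : forall b, 0 <= sumL (fun w => eps ^ badw (b :: w)) (allw n)).
    { intro b. apply sumL_nonneg. intro; apply pow_le; lra. }
    pose proof (IHn I1) as A1. pose proof (IHn I2) as A2. pose proof (IHn I3) as A3. pose proof (IHn I4) as A4.
    pose proof (N I1). pose proof (N I2). pose proof (N I3). pose proof (N I4).
    assert (Rp : 0 < rho ^ n) by (apply pow_lt; lra).
    simpl uu in *. rewrite <- tech_pow_Rmult.
    set (P := rho ^ n) in *.
    set (S1 := sumL (fun w : list idx => eps ^ badw (I1 :: w)) (allw n)) in *.
    set (S2 := sumL (fun w : list idx => eps ^ badw (I2 :: w)) (allw n)) in *.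
    set (S3 := sumL (fun w : list idx => eps ^ badw (I3 :: w)) (allw n)) in *.
    set (S4 := sumL (fun w : list idx => eps ^ badw (I4 :: w)) (allw n)) in *.
    assert (X1 : eps * S1 <= eps * (P * 2)) by (apply Rmult_le_compat_l; lra).
    assert (X4 : eps * S4 <= eps * (P * 2)) by (apply Rmult_le_compat_l; lra).
    assert (X5 : P * (2 + 2 * eps) <= P * (rho - 2) ^ 2) by (apply Rmult_le_compat_l; lra).
    destruct a; simpl badb; rewrite ?pow_O, ?pow_1; simpl uu; simpl pow in X5; nra.
Qed.

Definition mu : R := 2 + sqrt 2.
Definition PF (u : nat -> idx) : Prop := forall m, badb (u m) (u (S m)) = false.

Lemma sqrt2_facts : 1 <= sqrt 2 /\ sqrt 2 * sqrt 2 = 2 /\ sqrt 2 < 2.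
Proof.
  assert (H := sqrt_sqrt 2 ltac:(lra)). assert (H0 := sqrt_pos 2).
  split; [|split; auto]; nra.
Qed.

Definition V (a : idx) : R := match a with I1 | I4 => sqrt 2 | _ => 1 end.
Definition mass (w : list idx) : R := V (last w I1) / mu ^ length w.

Lemma mu_pos : 3 <= mu.
Proof. unfold mu. pose proof sqrt2_facts. lra. Qed.

Lemma V_pos a : 0 < V a <= sqrt 2.
Proof. pose proof sqrt2_facts. destruct a; simpl; lra. Qed.

Lemma mass_pos w : 0 < mass w.
Proof.
  unfold mass. pose proof (V_pos (last w I1)). pose proof mu_pos.
  apply Rdiv_lt_0_compat; [lra|apply pow_lt; lra].
Qed.

Definition chd (F : list idx -> R) (v : list idx) (b : idx) : R :=
  if badb (last v I1) b then 0 else F (v ++ b :: nil).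
Definition CS (F : list idx -> R) (v : list idx) : R :=
  chd F v I1 + chd F v I2 + chd F v I3 + chd F v I4.

Lemma CS_le F G v : (forall b, badb (last v I1) b = false -> F (v ++ b :: nil) <= G (v ++ b :: nil)) ->
  CS F v <= CS G v.
Proof.
  intro H. unfold CS, chd.
  assert (K : forall b, (if badb (last v I1) b then 0 else F (v ++ b :: nil)) <=
                        (if badb (last v I1) b then 0 else G (v ++ b :: nil))).
  { intro b. destruct (badb (last v I1) b) eqn:E; [lra|auto]. }
  pose proof (K I1); pose proof (K I2); pose proof (K I3); pose proof (K I4). lra.
Qed.

Lemma CS_plus F G v : CS (fun u => F u + G u) v = CS F v + CS G v.
Proof. unfold CS, chd. destruct (badb (last v I1) I1), (badb (last v I1) I2), (badb (last v I1) I3), (badb (last v I1) I4); ring. Qed.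

Lemma CS_zero v : CS (fun _ => 0) v = 0.
Proof. unfold CS, chd. destruct (badb (last v I1) I1), (badb (last v I1) I2), (badb (last v I1) I3), (badb (last v I1) I4); ring. Qed.

Lemma div_eq (k a b c d : R) : a = k * c -> b = k * d -> k <> 0 -> d <> 0 -> a / b = c / d.
Proof. intros -> -> Hk Hd. field. auto. Qed.

Lemma CS_mass v : CS mass v = mass v.
Proof.
  unfold CS, chd, mass. rewrite !last_last, !length_app. simpl length.
  replace (length v + 1)%nat with (S (length v)) by lia. simpl pow.
  assert (P : 0 < mu ^ length v) by (apply pow_lt; pose proof mu_pos; lra).
  pose proof mu_pos. pose proof sqrt2_facts.
  assert (Q : 0 < (2 + sqrt 2) ^ length v) by (unfold mu in P; auto).
  destruct (last v I1); simpl badb; simpl V; unfold mu in *; field_simplify; try lra;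
  apply (div_eq (2 + sqrt 2)); try ring; try nra.
Qed.

Definition pref (u v : list idx) : Prop :=
  (length u <= length v)%nat /\ forall i, (i < length u)%nat -> nth i u I1 = nth i v I1.

Lemma pref_refl v : pref v v.
Proof. split; auto. Qed.

Lemma pref_nil v : pref nil v.
Proof. split; simpl; [lia|intros; lia]. Qed.

Lemma nth_snoc_l (v : list idx) b i : (i < length v)%nat -> nth i (v ++ b :: nil) I1 = nth i v I1.
Proof. intro; apply app_nth1; auto. Qed.

Lemma nth_snoc_r (v : list idx) b : nth (length v) (v ++ b :: nil) I1 = b.
Proof. rewrite app_nth2 by lia. rewrite Nat.sub_diag. auto. Qed.

Lemma pref_child w v b : pref w (v ++ b :: nil) -> pref w v \/ w = v ++ b :: nil.
Proof.
  intros [H1 H2]. rewrite length_app in H1. simpl in H1.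
  destruct (Nat.le_gt_cases (length w) (length v)).
  - left. split; auto. intros i Hi. rewrite H2 by auto. apply nth_snoc_l. lia.
  - right. apply nth_ext with (d := I1) (d' := I1).
    + rewrite length_app. simpl. lia.
    + intros. apply H2. auto.
Qed.

Lemma pref_child2 w v b : pref (v ++ b :: nil) w -> pref v w.
Proof.
  intros [H1 H2]. rewrite length_app in H1, H2. simpl in *. split; [lia|].
  intros i Hi. rewrite <- H2 by lia. rewrite nth_snoc_l; auto.
Qed.

Lemma pref_snoc w v b : pref w v -> pref w (v ++ b :: nil).
Proof.
  intros [H1 H2]. split; [rewrite length_app; simpl; lia|]. intros i Hi. rewrite nth_snoc_l by lia. auto.
Qed.

Definition fm (w v : list idx) : R :=
  if excluded_middle_informative (pref w v) then mass v
  else if excluded_middle_informative (pref v w) then mass w else 0.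

Lemma fm_nonneg w v : 0 <= fm w v.
Proof.
  unfold fm. destruct (excluded_middle_informative _); [left; apply mass_pos|].
  destruct (excluded_middle_informative _); [left; apply mass_pos|lra].
Qed.

Lemma fm_CS w v : CS (fm w) v <= fm w v.
Proof.
  unfold fm at 2. destruct (excluded_middle_informative (pref w v)) as [Hwv|Hwv].
  - rewrite <- CS_mass. apply CS_le. intros b _. unfold fm.
    destruct (excluded_middle_informative _) as [_|N]; [lra|]. exfalso; apply N, pref_snoc; auto.
  - destruct (excluded_middle_informative (pref v w)) as [Hvw|Hvw].
    + assert (Hlt : (length v < length w)%nat).
      { destruct Hvw as [H1 H2]. destruct (Nat.eq_dec (length v) (length w)); [|lia].
        exfalso. apply Hwv. split; [lia|]. intros i Hi. symmetry. apply H2. lia. }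
      set (b0 := nth (length v) w I1).
      assert (T : forall b, chd (fm w) v b <= if idx_eq_dec b b0 then mass w else 0).
      { intro b. unfold chd. pose proof (mass_pos w).
        destruct (badb (last v I1) b); [destruct (idx_eq_dec b b0); lra|].
        destruct (idx_eq_dec b b0) as [->|ne].
        - unfold fm. destruct (excluded_middle_informative _) as [Hp|Hp].
          + destruct (pref_child _ _ _ Hp) as [Hp2|Hp2]; [contradiction|]. rewrite Hp2. lra.
          + destruct (excluded_middle_informative _); lra.
        - unfold fm. destruct (excluded_middle_informative _) as [Hp|Hp].
          + exfalso. apply ne. destruct Hp as [_ Hp]. unfold b0. rewrite (Hp (length v)) by auto.
            rewrite nth_snoc_r. auto.
          + destruct (excluded_middle_informative _) as [Hp2|Hp2]; [|lra].
            exfalso. apply ne. destruct Hp2 as [_ Hp2]. unfold b0. rewrite <- Hp2.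
            * rewrite nth_snoc_r; auto.
            * rewrite length_app; simpl; lia. }
      unfold CS. pose proof (T I1). pose proof (T I2). pose proof (T I3). pose proof (T I4).
      pose proof (mass_pos w).
      clearbody b0. destruct b0; simpl in *; lra.
    + assert (Z : forall b, chd (fm w) v b = 0).
      { intro b. unfold chd. destruct (badb _ _); auto. unfold fm.
        destruct (excluded_middle_informative _) as [Hp|Hp].
        - exfalso. destruct (pref_child _ _ _ Hp) as [Hp2|Hp2]; [contradiction|]. apply Hvw. rewrite Hp2.
          apply pref_snoc, pref_refl.
        - destruct (excluded_middle_informative _) as [Hp2|Hp2]; auto.
          exfalso. apply Hvw. eapply pref_child2; eauto. }
      unfold CS. rewrite !Z. lra.
Qed.

Section Kraft.
Variable W : nat -> list idx.

Fixpoint fs (M : nat) (v : list idx) : R :=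
  match M with O => 0 | S M => fs M v + fm (W M) v end.

Lemma fs_nonneg M v : 0 <= fs M v.
Proof. induction M; simpl. lra. pose proof (fm_nonneg (W M) v). lra. Qed.

Lemma fs_mono M M' v : (M <= M')%nat -> fs M v <= fs M' v.
Proof.
  intro H. induction H. lra. simpl. pose proof (fm_nonneg (W m) v). lra.
Qed.

Lemma fs_CS M v : CS (fs M) v <= fs M v.
Proof.
  induction M.
  - simpl. rewrite CS_zero. lra.
  - simpl. rewrite CS_plus. pose proof (fm_CS (W M) v). lra.
Qed.

Definition good (v : list idx) : Prop := exists M, mass v <= fs M v.

Lemma children_good v : (forall b, badb (last v I1) b = false -> good (v ++ b :: nil)) -> good v.
Proof.
  intro H.
  assert (K : forall b, exists Mb, badb (last v I1) b = false -> mass (v ++ b :: nil) <= fs Mb (v ++ b :: nil)).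
  { intro b. destruct (badb (last v I1) b) eqn:E.
    - exists O. discriminate.
    - destruct (H b E) as [Mb HM]. exists Mb. auto. }
  destruct (K I1) as [M1 H1]. destruct (K I2) as [M2 H2]. destruct (K I3) as [M3 H3]. destruct (K I4) as [M4 H4].
  exists (M1 + M2 + M3 + M4)%nat. rewrite <- CS_mass.
  eapply Rle_trans; [|apply fs_CS]. apply CS_le. intros b Hb.
  destruct b.
  - eapply Rle_trans; [apply H1; auto| apply fs_mono; lia].
  - eapply Rle_trans; [apply H2; auto| apply fs_mono; lia].
  - eapply Rle_trans; [apply H3; auto| apply fs_mono; lia].
  - eapply Rle_trans; [apply H4; auto| apply fs_mono; lia].
Qed.

Definition pick (v : list idx) : idx :=
  match excluded_middle_informative (exists b, badb (last v I1) b = false /\ ~ good (v ++ b :: nil)) with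
  | left H => proj1_sig (constructive_indefinite_description _ H)
  | right _ => I1
  end.

Lemma pick_spec v : ~ good v -> badb (last v I1) (pick v) = false /\ ~ good (v ++ pick v :: nil).
Proof.
  intro Hn. unfold pick. destruct (excluded_middle_informative _) as [H|H].
  - destruct (constructive_indefinite_description _ H) as [b Hb]. simpl. auto.
  - exfalso. apply Hn, children_good. intros b Hb. apply NNPP. intro Hg. apply H. eauto.
Qed.

Fixpoint path (j : nat) : list idx := match j with O => nil | S j => path j ++ pick (path j) :: nil end.

Definition beta (i : nat) : idx := pick (path i).

Lemma path_map j : path j = map beta (seq 0 j).
Proof. induction j. auto. simpl path. rewrite seq_S, map_app, <- IHj. auto. Qed.

Hypothesis Hcov : forall b, PF b -> exists n, W n = map b (seq 0 (length (W n))).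

Lemma kraft : exists M, sqrt 2 <= fs M nil.
Proof.
  apply NNPP. intro Hno.
  assert (G0 : ~ good nil).
  { intros [M HM]. apply Hno. exists M. unfold mass in HM. simpl in HM. lra. }
  assert (Hp : forall j, ~ good (path j)).
  { induction j; auto. simpl. apply pick_spec; auto. }
  assert (Hpf : PF beta).
  { intro m. change (badb (beta m) (pick (path (S m))) = false).
    assert (E : beta m = last (path (S m)) I1).
    { unfold beta. simpl path. rewrite last_last. auto. }
    rewrite E. apply (pick_spec (path (S m)) (Hp (S m))). }
  destruct (Hcov beta Hpf) as [n Hn].
  apply (Hp (length (W n))). exists (S n). rewrite path_map, <- Hn. simpl.
  unfold fm. destruct (excluded_middle_informative _) as [_|N]; [|exfalso; apply N, pref_refl].
  pose proof (fs_nonneg n (W n)). lra.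
Qed.

End Kraft.

Lemma gap_abs (g x y : R) : g <= x - y \/ g <= y - x -> g <= Rabs (x - y).
Proof.
  intros [H|H]. - eapply Rle_trans; [exact H| apply Rle_abs].
  - rewrite Rabs_minus_sym. eapply Rle_trans; [exact H| apply Rle_abs].
Qed.

Fixpoint seq24 (k : nat) (b : nat -> idx) : nat -> idx :=
  match k with O => b | S k => pre 0 (fun _ => I1) I2 I4 (seq24 k b) end.

Fixpoint L24 (k : nat) (b : nat -> idx) : list (nat -> idx) :=
  match k with
  | O => b :: nil
  | S k => map (pre 0 (fun _ => I1) I2 I4) (L24 k b) ++ map (pre 0 (fun _ => I1) I3 I1) (L24 k b)
  end.

Lemma pre0_f f f' a b t : pre 0 f a b t = pre 0 f' a b t.
Proof. apply functional_extensionality. intro n. unfold pre. destruct (Nat.ltb_spec n 0); [lia|auto]. Qed.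

Lemma exp_mono_le (a b : R) : a <= b -> exp a <= exp b.
Proof. intros [H|H]; [left; apply exp_increasing; auto| subst; lra]. Qed.

Section Main.
Variable lam : R.
Hypothesis Hl0 : 0 < lam.
Hypothesis Hl1 : lam < 1/4.
Hypothesis HQ5 : 0 < 1 - 5*lam + lam^2.

Definition tr (i : idx) : R :=
  match i with I1 => 0 | I2 => 2*lam | I3 => 3*lam - lam^2 | I4 => 1 - lam end.

Lemma ifs_eq i x : ifs lam i x = lam * x + tr i.
Proof. destruct i; simpl; ring. Qed.

Lemma tr_bounds i : 0 <= tr i <= 1 - lam.
Proof. destruct i; simpl; nra. Qed.

Lemma compose_aff c n y : compose lam c n y = compose lam c n 0 + lam ^ n * y.
Proof.
  revert y. induction n; intros y; simpl. ring.
  rewrite (IHn (ifs lam (c n) y)), (IHn (ifs lam (c n) 0)), !ifs_eq. ring.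
Qed.

Lemma compose_S0 c n : compose lam c (S n) 0 = compose lam c n 0 + lam ^ n * tr (c n).
Proof. simpl. rewrite compose_aff, ifs_eq. ring. Qed.

Lemma compose_ext c c' n y : (forall j, (j < n)%nat -> c j = c' j) -> compose lam c n y = compose lam c' n y.
Proof.
  revert y. induction n; intros y H; simpl; auto.
  rewrite H by lia. apply IHn. intros; apply H; lia.
Qed.

Lemma S_growing c : Un_growing (fun n => compose lam c n 0).
Proof. intro n. rewrite compose_S0. pose proof (tr_bounds (c n)). pose proof (pow_pos' lam n Hl0). nra. Qed.

Lemma S_le c n : compose lam c n 0 <= 1 - lam ^ n.
Proof.
  induction n. simpl; lra. rewrite compose_S0. pose proof (tr_bounds (c n)). pose proof (pow_pos' lam n Hl0).
  simpl. nra.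
Qed.

Lemma S_ub c : has_ub (fun n => compose lam c n 0).
Proof.
  exists 1. intros x [i ->]. pose proof (S_le c i). pose proof (pow_pos' lam i Hl0). lra.
Qed.

Definition pi (c : nat -> idx) : R := proj1_sig (growing_cv _ (S_growing c) (S_ub c)).

Lemma pi_cv c : Un_cv (fun n => compose lam c n 0) (pi c).
Proof. unfold pi. destruct (growing_cv _ _ _). simpl. auto. Qed.

Lemma coding_iff x c : is_coding lam x c <-> x = pi c.
Proof.
  split; intro H.
  - eapply UL_sequence. exact H. apply pi_cv.
  - subst. apply pi_cv.
Qed.

Lemma pi_01 c : 0 <= pi c <= 1.
Proof.
  split.
  - apply (cv_ge _ _ _ (pi_cv c)). intro n. pose proof (S_growing c).
    induction n. simpl; lra. specialize (H n). lra.
  - apply (cv_le _ _ _ (pi_cv c)). intro n. pose proof (S_le c n). pose proof (pow_pos' lam n Hl0). lra.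
Qed.


Lemma compose_Sfront c n y : compose lam c (S n) y = ifs lam (c O) (compose lam (shift c) n y).
Proof.
  revert y. induction n; intro y. reflexivity.
  change (compose lam c (S (S n)) y) with (compose lam c (S n) (ifs lam (c (S n)) y)).
  rewrite IHn. reflexivity.
Qed.

Lemma pi_shift c : pi c = lam * pi (shift c) + tr (c O).
Proof.
  apply (UL_sequence (fun n => compose lam c (S n) 0)).
  - apply (cv_shift1 (fun n => compose lam c n 0)), pi_cv.
  - eapply (Un_cv_ext (fun n => lam * compose lam (shift c) n 0 + tr (c O))).
    + intro n. rewrite compose_Sfront, ifs_eq. reflexivity.
    + apply CV_plus; [|apply cv_const].
      apply (CV_mult (fun _ => lam)); [apply cv_const| apply pi_cv].
Qed.

Lemma pi_in c : tr (c O) <= pi c <= tr (c O) + lam.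
Proof. rewrite pi_shift. pose proof (pi_01 (shift c)). nra. Qed.


Lemma pi_split c m : pi c = compose lam c m (pi (shiftn m c)).
Proof.
  induction m.
  - simpl. apply f_equal. apply functional_extensionality. intro; reflexivity.
  - rewrite IHm. simpl. f_equal. rewrite pi_shift, ifs_eq. f_equal.
    + f_equal. f_equal. apply functional_extensionality. intro n. unfold shift, shiftn. f_equal. lia.
    + unfold shiftn. f_equal. f_equal. lia.
Qed.

Lemma shift_shift c : shift (shift c) = shiftn 2 c.
Proof. apply functional_extensionality. intro; reflexivity. Qed.

Lemma first_diff c c' : pi c = pi c' -> c O <> c' O ->
  ((c O = I2 /\ c 1%nat = I4 /\ c' O = I3 /\ c' 1%nat = I1) \/
   (c O = I3 /\ c 1%nat = I1 /\ c' O = I2 /\ c' 1%nat = I4)) /\ pi (shiftn 2 c) = pi (shiftn 2 c').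
Proof.
  intros He Hne.
  assert (A : pi c = lam * pi (shift c) + tr (c O)) by apply pi_shift.
  assert (B : pi (shift c) = lam * pi (shiftn 2 c) + tr (c 1%nat)) by (rewrite <- shift_shift; apply pi_shift).
  assert (A' : pi c' = lam * pi (shift c') + tr (c' O)) by apply pi_shift.
  assert (B' : pi (shift c') = lam * pi (shiftn 2 c') + tr (c' 1%nat)) by (rewrite <- shift_shift; apply pi_shift).
  pose proof (pi_01 (shiftn 2 c)) as Z. pose proof (pi_01 (shiftn 2 c')) as Z'.
  assert (Y := pi_01 (shift c)). assert (Y' := pi_01 (shift c')).
  rewrite He in A. clear He.
  set (y := pi (shift c)) in *. set (y' := pi (shift c')) in *.
  set (z := pi (shiftn 2 c)) in *. set (z' := pi (shiftn 2 c')) in *.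
  clearbody y y' z z'.
  assert (Ly : 0 <= lam * y <= lam) by nra. assert (Ly' : 0 <= lam * y' <= lam) by nra.
  assert (Lz : 0 <= lam * z <= lam) by nra. assert (Lz' : 0 <= lam * z' <= lam) by nra.
  assert (L2 : 0 < lam ^ 2 < lam / 4) by nra.
  assert (T1 := tr_bounds (c 1%nat)). assert (T1' := tr_bounds (c' 1%nat)).
  destruct (c O), (c' O); try congruence; cbn [tr] in A, A';
  try (exfalso; lra).
  -
    assert (Hy : y = y' + 1 - lam) by (apply (Rmult_eq_reg_l lam); [nra| lra]).
    destruct (c 1%nat); cbn [tr] in B; try (exfalso; lra).
    assert (Hy' : y' = lam * z) by lra.
    destruct (c' 1%nat); cbn [tr] in B'; try (exfalso; lra).
    split; [left; auto|]. apply (Rmult_eq_reg_l lam); lra.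
  -
    assert (Hy : y' = y + 1 - lam) by (apply (Rmult_eq_reg_l lam); [nra| lra]).
    destruct (c' 1%nat); cbn [tr] in B'; try (exfalso; lra).
    assert (Hy' : y = lam * z') by lra.
    destruct (c 1%nat); cbn [tr] in B; try (exfalso; lra).
    split; [right; auto|]. apply (Rmult_eq_reg_l lam); lra.
Qed.

Lemma compose_inj c n y y' : compose lam c n y = compose lam c n y' -> y = y'.
Proof.
  rewrite (compose_aff c n y), (compose_aff c n y'). intro H.
  assert (0 < lam ^ n) by (apply pow_lt; auto).
  apply (Rmult_eq_reg_l (lam ^ n)); lra.
Qed.

Lemma tail_eq c c' p : (forall q, (q < p)%nat -> c q = c' q) -> pi c = pi c' ->
  pi (shiftn p c) = pi (shiftn p c').
Proof.
  intros Hqq He. rewrite (pi_split c p), (pi_split c' p) in He.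
  rewrite (compose_ext c c' p) in He by auto. eapply compose_inj; eauto.
Qed.

Lemma shiftn_shiftn m p c : shiftn m (shiftn p c) = shiftn (p + m) c.
Proof. apply functional_extensionality. intro n. unfold shiftn. f_equal. lia. Qed.

Lemma diff_at c c' p : pi c = pi c' -> (forall q, (q < p)%nat -> c q = c' q) -> c p <> c' p ->
  ((c p = I2 /\ c (S p) = I4 /\ c' p = I3 /\ c' (S p) = I1) \/
   (c p = I3 /\ c (S p) = I1 /\ c' p = I2 /\ c' (S p) = I4)) /\
  pi (shiftn (S (S p)) c) = pi (shiftn (S (S p)) c').
Proof.
  intros He Hqq Hne.
  pose proof (tail_eq c c' p Hqq He) as Ht.
  destruct (first_diff (shiftn p c) (shiftn p c') Ht) as [H1 H2].
  { unfold shiftn. rewrite Nat.add_0_r. auto. }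
  rewrite !shiftn_shiftn in H2. unfold shiftn in H1.
  rewrite !Nat.add_0_r, !Nat.add_1_r in H1. replace (p + 2)%nat with (S (S p)) in H2 by lia.
  split; auto.
Qed.

Lemma diff_bad c c' p : pi c = pi c' -> (forall q, (q < p)%nat -> c q = c' q) -> c p <> c' p ->
  badb (c p) (c (S p)) = true.
Proof.
  intros. destruct (diff_at c c' p) as [[[-> [-> _]]|[-> [-> _]]] _]; auto.
Qed.


Lemma pf_unique u c : PF u -> pi c = pi u -> c = u.
Proof.
  intros Hu He. apply functional_extensionality_dep. intro n.
  destruct (idx_eq_dec (c n) (u n)) as [e|ne]; auto. exfalso.
  destruct (least_diff u c) as [p [Hp1 Hp2]]. { exists n; auto. }
  assert (badb (u p) (u (S p)) = true).
  { apply (diff_bad u c p); auto; intros q Hq'; symmetry; auto. }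
  rewrite Hu in H; discriminate.
Qed.

Definition sw (a : idx) : idx := match a with I1 => I4 | I2 => I3 | I3 => I2 | I4 => I1 end.

Definition swap (m : nat) (c : nat -> idx) : nat -> idx :=
  fun n => if Nat.eqb n m then sw (c m) else if Nat.eqb n (S m) then sw (c (S m)) else c n.

Lemma pi_swap m c : badb (c m) (c (S m)) = true -> pi (swap m c) = pi c.
Proof.
  intro Hb. rewrite (pi_split (swap m c) m), (pi_split c m).
  rewrite (compose_ext (swap m c) c m).
  2:{ intros j Hj. unfold swap. destruct (Nat.eqb_spec j m); [lia|]. destruct (Nat.eqb_spec j (S m)); [lia|auto]. }
  f_equal.
  rewrite (pi_shift (shiftn m (swap m c))), (pi_shift (shiftn m c)).
  rewrite (pi_shift (shift (shiftn m (swap m c)))), (pi_shift (shift (shiftn m c))).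
  assert (E : shift (shift (shiftn m (swap m c))) = shift (shift (shiftn m c))).
  { apply functional_extensionality. intro n. unfold shift, shiftn, swap.
    destruct (Nat.eqb_spec (m + S (S n)) m); [lia|]. destruct (Nat.eqb_spec (m + S (S n)) (S m)); [lia|auto]. }
  rewrite E. unfold shift, shiftn, swap. rewrite Nat.add_0_r, Nat.eqb_refl.
  replace (m + 1)%nat with (S m) by lia. rewrite Nat.eqb_refl.
  destruct (Nat.eqb_spec (S m) m); [lia|].
  destruct (c m), (c (S m)); try discriminate; cbn [sw tr]; ring.
Qed.

Lemma pi_pre_eq n0 f a b t d : (forall q, (q < n0)%nat -> d q = f q) -> d n0 = a -> d (S n0) = b ->
  pi t = pi (shiftn (S (S n0)) d) -> pi (pre n0 f a b t) = pi d.
Proof.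
  intros H1 H2 H3 H4. rewrite (pi_split (pre n0 f a b t) (S (S n0))), pre_shift, (pi_split d (S (S n0))), H4.
  apply compose_ext. intros j Hj. unfold pre.
  destruct (Nat.ltb_spec j n0); [symmetry; auto|].
  destruct (Nat.eqb_spec j n0); [subst; auto|].
  destruct (Nat.eqb_spec j (S n0)); [subst; auto|lia].
Qed.

Lemma split_core x n0 d1 d2 :
  pi d1 = x -> pi d2 = x ->
  (forall d q, pi d = x -> (q < n0)%nat -> d q = d1 q) ->
  d1 n0 = I2 -> d1 (S n0) = I4 -> d2 n0 = I3 -> d2 (S n0) = I1 ->
  pi (shiftn (S (S n0)) d1) = pi (shiftn (S (S n0)) d2) ->
  forall d, pi d = x <-> exists t, pi t = pi (shiftn (S (S n0)) d1) /\
     (d = pre n0 d1 I2 I4 t \/ d = pre n0 d1 I3 I1 t).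
Proof.
  intros E1 E2 Hag A1 A2 B1 B2 Ht d. split.
  - intro Ed. exists (shiftn (S (S n0)) d).
    assert (Hq : forall q, (q < n0)%nat -> d q = d1 q) by (intros; apply Hag; auto).
    assert (Hq2 : forall q, (q < n0)%nat -> d q = d2 q) by (intros; rewrite (Hag d2); auto).
    destruct (idx_eq_dec (d n0) I2) as [e2|n2].
    + assert (DA := diff_at d d2 n0 ltac:(congruence) Hq2 ltac:(congruence)).
      destruct DA as [[[X1 [X2 _]]|[X1 _]] X3]; try congruence.
      split; [rewrite X3; auto|]. left. rewrite (pre_eta n0 d) at 1. rewrite X1, X2.
      apply functional_extensionality. intro n. unfold pre. destruct (Nat.ltb_spec n n0); auto.
    + assert (DA := diff_at d d1 n0 ltac:(congruence) Hq ltac:(congruence)).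
      destruct DA as [[[X1 _]|[X1 [X2 _]]] X3]; try congruence.
      split; [rewrite X3; auto|]. right. rewrite (pre_eta n0 d) at 1. rewrite X1, X2.
      apply functional_extensionality. intro n. unfold pre. destruct (Nat.ltb_spec n n0); auto.
  - intros [t [Et [-> | ->]]].
    + rewrite <- E1. apply pi_pre_eq; [intros; auto| auto| auto| auto].
    + rewrite <- E2. apply pi_pre_eq; [intros q Hq; apply (Hag d2); auto| auto| auto| rewrite Et; auto].
Qed.

Definition Cod (x : R) (c : nat -> idx) : Prop := pi c = x.

Lemma split x : (exists c1 c2, pi c1 = x /\ pi c2 = x /\ exists n, c1 n <> c2 n) ->
  exists n0 f y, (exists t, pi t = y) /\
   forall d, pi d = x <-> exists t, pi t = y /\ (d = pre n0 f I2 I4 t \/ d = pre n0 f I3 I1 t).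
Proof.
  intro H.
  destruct (least_nat (fun n => exists c1 c2, pi c1 = x /\ pi c2 = x /\ c1 n <> c2 n)) as [n0 [[d1 [d2 [E1 [E2 Hne]]]] Hmin]].
  { destruct H as [c1 [c2 [E1 [E2 [n Hn]]]]]. exists n; exists c1, c2; auto. }
  assert (Hag : forall d q, pi d = x -> (q < n0)%nat -> d q = d1 q).
  { intros d q Ed Hq. destruct (idx_eq_dec (d q) (d1 q)); auto. exfalso. apply (Hmin q Hq). exists d, d1; auto. }
  assert (Hq12 : forall q, (q < n0)%nat -> d1 q = d2 q) by (intros; symmetry; apply Hag; auto).
  assert (DA := diff_at d1 d2 n0 ltac:(congruence) Hq12 Hne).
  destruct DA as [[[A1 [A2 [B1 B2]]]|[A1 [A2 [B1 B2]]]] Ht].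
  - exists n0, d1, (pi (shiftn (S (S n0)) d1)). split; [eauto|].
    apply (split_core x n0 d1 d2); auto.
  - assert (Hag2 : forall d q, pi d = x -> (q < n0)%nat -> d q = d2 q).
    { intros. rewrite (Hag d); auto. }
    exists n0, d2, (pi (shiftn (S (S n0)) d2)). split; [eauto|].
    apply (split_core x n0 d2 d1); auto.
Qed.

Lemma pre_inj n0 f a b t t' : pre n0 f a b t = pre n0 f a b t' -> t = t'.
Proof. intro H. rewrite <- (pre_shift n0 f a b t), <- (pre_shift n0 f a b t'), H. auto. Qed.

Lemma pre_neq n0 f t t' : pre n0 f I2 I4 t <> pre n0 f I3 I1 t'.
Proof. intro H. assert (E := f_equal (fun g => g n0) H). simpl in E. rewrite !pre_n0 in E. discriminate. Qed.

Lemma count_pow2 : forall L x (l : list (nat -> idx)), length l = L -> NoDup l ->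
  (forall c, pi c = x <-> In c l) -> (1 <= L)%nat -> exists k, L = (2 ^ k)%nat.
Proof.
  intro L. induction L as [L IH] using (well_founded_induction Wf_nat.lt_wf).
  intros x l HL Hnd Hl H1.
  destruct (classic (exists c1 c2, pi c1 = x /\ pi c2 = x /\ exists n, c1 n <> c2 n)) as [Hdd|Hnd2].
  - destruct (split x Hdd) as [n0 [f [y [[t0 Ht0] Hs]]]].
    set (lt := map (shiftn (S (S n0))) (filter (fun d => isI2 (d n0)) l)).
    assert (Hform : forall d, In d l -> isI2 (d n0) = true -> d = pre n0 f I2 I4 (shiftn (S (S n0)) d)).
    { intros d Hd1 Hd2. apply Hl in Hd1. apply Hs in Hd1. destruct Hd1 as [t [Et [-> | ->]]].
      - rewrite pre_shift. auto.
      - rewrite pre_n0 in Hd2. discriminate. }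
    assert (Hlt : forall t, pi t = y <-> In t lt).
    { intro t. split.
      - intro Et. unfold lt. apply in_map_iff. exists (pre n0 f I2 I4 t). split; [apply pre_shift|].
        apply filter_In. split; [|rewrite pre_n0; auto]. apply Hl, Hs. eauto.
      - unfold lt. intro Hin. apply in_map_iff in Hin. destruct Hin as [d [<- Hd]].
        apply filter_In in Hd. destruct Hd as [Hd1 Hd2].
        pose proof (Hform d Hd1 Hd2) as E. apply Hl in Hd1. apply Hs in Hd1.
        destruct Hd1 as [t [Et [E2 | E2]]].
        + rewrite E2, pre_shift. auto.
        + rewrite E2 in Hd2. rewrite pre_n0 in Hd2. discriminate. }
    assert (Hndt : NoDup lt).
    { unfold lt. apply NoDup_map_inj. apply NoDup_filter; auto.
      intros a b Ha Hb E. apply filter_In in Ha, Hb.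
      rewrite (Hform a), (Hform b) by tauto. rewrite E. auto. }
    set (l' := map (pre n0 f I2 I4) lt ++ map (pre n0 f I3 I1) lt).
    assert (Hl' : length l = length l').
    { apply NoDup_same_length; auto.
      - unfold l'. apply NoDup_app.
        + apply NoDup_map_inj; auto. intros; eapply pre_inj; eauto.
        + apply NoDup_map_inj; auto. intros; eapply pre_inj; eauto.
        + intros a Ha Hb. apply in_map_iff in Ha, Hb. destruct Ha as [t [<- _]]. destruct Hb as [t' [E _]].
          symmetry in E. eapply pre_neq; eauto.
      - intro d. rewrite <- Hl, Hs. unfold l'. rewrite in_app_iff, !in_map_iff. split.
        + intros [t [Et [-> | ->]]]; [left|right]; exists t; split; auto; apply Hlt; auto.
        + intros [[t [<- Ht]]|[t [<- Ht]]]; exists t; (split; [apply Hlt; auto|auto]). }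
    assert (Hlen : L = (2 * length lt)%nat).
    { rewrite <- HL, Hl'. unfold l'. rewrite length_app, !length_map. lia. }
    assert (Hpos : (1 <= length lt)%nat).
    { assert (In t0 lt) by (apply Hlt; auto). destruct lt; simpl in *; [contradiction|lia]. }
    destruct (IH (length lt) ltac:(lia) y lt eq_refl Hndt Hlt Hpos) as [k Hk].
    exists (S k). rewrite Hlen, Hk. simpl. lia.
  - exists O. simpl. destruct l as [|a [|b l']]; simpl in HL; try lia.
    exfalso. inversion Hnd; subst. apply H2. left. symmetry.
    apply functional_extensionality. intro n. destruct (idx_eq_dec (a n) (b n)); auto.
    exfalso. apply Hnd2. exists a, b. split; [apply Hl; simpl; auto|]. split; [apply Hl; simpl; auto|]. eauto.
Qed.

Lemma swap_at m c : swap m c m = sw (c m).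
Proof. unfold swap. rewrite Nat.eqb_refl. auto. Qed.

Lemma sw_neq a : sw a <> a.
Proof. destruct a; discriminate. Qed.

Lemma bad_bound x (l : list (nat -> idx)) c n : NoDup l -> (forall d, pi d = x <-> In d l) -> pi c = x ->
  (length (filter (fun m => badb (c m) (c (S m))) (seq 0 n)) < length l)%nat.
Proof.
  intros Hnd Hl Hc.
  set (M := filter (fun m => badb (c m) (c (S m))) (seq 0 n)).
  assert (HM : forall m, In m M -> badb (c m) (c (S m)) = true).
  { intros m Hm. apply filter_In in Hm. tauto. }
  assert (Hnd' : NoDup (c :: map (fun m => swap m c) M)).
  { constructor.
    - intro Hin. apply in_map_iff in Hin. destruct Hin as [m [E Hm]].
      assert (E2 := f_equal (fun g => g m) E). simpl in E2. rewrite swap_at in E2. apply (sw_neq (c m)); auto.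
    - apply NoDup_map_inj. apply NoDup_filter, seq_NoDup.
      intros a b Ha Hb E. destruct (Nat.eq_dec a b); auto. exfalso.
      assert (E2 := f_equal (fun g => g a) E). simpl in E2. rewrite swap_at in E2.
      unfold swap in E2. destruct (Nat.eqb_spec a b); [contradiction|].
      destruct (Nat.eqb_spec a (S b)).
      + subst a. pose proof (HM _ Ha) as B1. pose proof (HM _ Hb) as B2.
        destruct (c b), (c (S b)); try discriminate; destruct (c (S (S b))); discriminate.
      + apply (sw_neq (c a)); auto. }
  assert (Hle := @NoDup_incl_length _ _ l Hnd'). simpl in Hle. rewrite length_map in Hle.
  apply Hle. intros d Hd. apply Hl. destruct Hd as [<-|Hd]; auto.
  apply in_map_iff in Hd. destruct Hd as [m [<- Hm]]. rewrite pi_swap; auto.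
Qed.

Lemma close_prefix c c' m : (forall q, (q < m)%nat -> c q = c' q) -> Rabs (pi c - pi c') <= lam ^ m.
Proof.
  intro H. rewrite (pi_split c m), (pi_split c' m), (compose_ext c c' m _ H).
  rewrite (compose_aff c' m (pi (shiftn m c))), (compose_aff c' m (pi (shiftn m c'))).
  replace (compose lam c' m 0 + lam ^ m * pi (shiftn m c) - (compose lam c' m 0 + lam ^ m * pi (shiftn m c')))
    with (lam ^ m * (pi (shiftn m c) - pi (shiftn m c'))) by ring.
  rewrite Rabs_mult, (Rabs_right (lam ^ m)) by (left; apply pow_lt; auto).
  pose proof (pi_01 (shiftn m c)). pose proof (pi_01 (shiftn m c')).
  assert (Rabs (pi (shiftn m c) - pi (shiftn m c')) <= 1) by (apply Rabs_le; lra).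
  pose proof (pow_lt lam m Hl0). nra.
Qed.

Lemma small_eq (a b : R) : (forall j, Rabs (a - b) <= lam ^ j) -> a = b.
Proof.
  intro H. destruct (Req_dec a b) as [e|ne]; auto. exfalso.
  assert (Hp : 0 < Rabs (a - b)) by (apply Rabs_pos_lt; lra).
  destruct (pow_lt_1_zero lam ltac:(rewrite Rabs_right; lra) (Rabs (a - b)) Hp) as [N HN].
  specialize (HN N (le_n _)). specialize (H N). rewrite Rabs_right in HN by (left; apply pow_lt; auto). lra.
Qed.

Definition NotFin (y : R) : Prop := ~ exists l : list (nat -> idx), forall c, pi c = y -> In c l.

Lemma notfin_ex y : NotFin y -> exists t, pi t = y.
Proof. intro H. apply NNPP. intro H2. apply H. exists nil. intros c Hc. apply H2. eauto. Qed.

Lemma stage x : NotFin x -> exists n0 f y, NotFin y /\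
  forall t, pi t = y -> pi (pre n0 f I2 I4 t) = x /\ pi (pre n0 f I3 I1 t) = x.
Proof.
  intro Hx. destruct (notfin_ex x Hx) as [c Hc].
  destruct (classic (exists c1 c2, pi c1 = x /\ pi c2 = x /\ exists n, c1 n <> c2 n)) as [Hdd|Hno].
  - destruct (split x Hdd) as [n0 [f [y [[t0 Ht0] Hs]]]]. exists n0, f, y. split.
    + intros [l Hl]. apply Hx. exists (map (pre n0 f I2 I4) l ++ map (pre n0 f I3 I1) l).
      intros d Hd. apply Hs in Hd. destruct Hd as [t [Et [-> | ->]]]; apply in_app_iff; [left|right];
        apply in_map; auto.
    + intros t Ht. split; apply Hs; exists t; auto.
  - exfalso. apply Hx. exists (c :: nil). intros d Hd. left.
    apply functional_extensionality. intro n. destruct (idx_eq_dec (c n) (d n)); auto.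
    exfalso. apply Hno. exists c, d. eauto.
Qed.

Definition state : Type := (nat * (nat -> idx) * R)%type.

Section Diag.
Variable x : R.
Variable e : nat -> (nat -> idx).

Definition Inv (s : state) : Prop :=
  let '(len, w, y) := s in NotFin y /\ forall t, pi t = y -> pi (glue len w t) = x.

Definition Good (j : nat) (s s' : state) : Prop :=
  let '(len, w, _) := s in let '(len', w', _) := s' in
  Inv s' /\ (len + 2 <= len')%nat /\ (forall n, (n < len)%nat -> w' n = w n) /\
  exists P, (len <= P < len')%nat /\ w' P <> e j P.

Lemma step_ex j s : Inv s -> exists s', Good j s s'.
Proof.
  destruct s as [[len w] y]. intros [Hy Hg].
  destruct (stage y Hy) as [n0 [f [y' [Hy' Hst]]]].
  assert (K : forall a b, (forall t, pi t = y' -> pi (pre n0 f a b t) = y) -> a <> e j (len + n0)%nat ->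
     exists s', Good j (len, w, y) s').
  { intros a b Hab Ha. exists (len + S (S n0), glue len w (pre n0 f a b (fun _ => I1)), y')%nat.
    simpl. split; [split; auto|]. { intros t Ht. rewrite glue_glue. apply Hg, Hab; auto. }
    split; [lia|]. split.
    - intros n Hn. unfold glue. destruct (Nat.ltb_spec n len); [auto|lia].
    - exists (len + n0)%nat. split; [lia|]. unfold glue. destruct (Nat.ltb_spec (len + n0) len); [lia|].
      replace (len + n0 - len)%nat with n0 by lia. rewrite pre_n0. auto. }
  destruct (idx_eq_dec (e j (len + n0)%nat) I2) as [E|E].
  - apply (K I3 I1); [intros; apply Hst; auto| rewrite E; discriminate].
  - apply (K I2 I4); [intros; apply Hst; auto| auto].
Qed.

Definition next (j : nat) (s : state) : state :=
  match excluded_middle_informative (exists s', Good j s s') with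
  | left H => proj1_sig (constructive_indefinite_description _ H)
  | right _ => s
  end.

Lemma next_good j s : Inv s -> Good j s (next j s).
Proof.
  intro H. unfold next. destruct (excluded_middle_informative _) as [H'|H'].
  - destruct (constructive_indefinite_description _ H'). simpl. auto.
  - exfalso. apply H', step_ex, H.
Qed.

Fixpoint st (j : nat) : state := match j with O => (O, fun _ => I1, x) | S j => next j (st j) end.

Definition slen (s : state) : nat := let '(l, _, _) := s in l.
Definition sw_ (s : state) : nat -> idx := let '(_, w, _) := s in w.

Lemma good_unfold j s s' : Good j s s' -> Inv s' /\ (slen s + 2 <= slen s')%nat /\
  (forall n, (n < slen s)%nat -> sw_ s' n = sw_ s n) /\
  exists P, (slen s <= P < slen s')%nat /\ sw_ s' P <> e j P.
Proof. destruct s as [[? ?] ?], s' as [[? ?] ?]. simpl. tauto. Qed.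

Hypothesis Hx : NotFin x.

Lemma st_inv j : Inv (st j).
Proof.
  induction j.
  - simpl. split; auto. intros t Ht. rewrite <- Ht. f_equal. apply functional_extensionality. intro n.
    unfold glue. simpl. f_equal. lia.
  - simpl. apply (good_unfold j (st j)), next_good, IHj.
Qed.

Lemma st_good j : Good j (st j) (st (S j)).
Proof. simpl. apply next_good, st_inv. Qed.

Lemma st_len j : (2 * j <= slen (st j))%nat.
Proof.
  induction j. simpl; lia. destruct (good_unfold _ _ _ (st_good j)) as [_ [H _]]. lia.
Qed.

Lemma st_agree j d n : (n < slen (st j))%nat -> sw_ (st (j + d)) n = sw_ (st j) n.
Proof.
  induction d; intro H. rewrite Nat.add_0_r; auto.
  rewrite Nat.add_succ_r. destruct (good_unfold _ _ _ (st_good (j + d))) as [_ [H1 [H2 _]]].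
  rewrite H2. apply IHd; auto. 
  assert (forall d', (slen (st j) <= slen (st (j + d')))%nat).
  { induction d'. rewrite Nat.add_0_r; lia. rewrite Nat.add_succ_r.
    destruct (good_unfold _ _ _ (st_good (j + d'))) as [_ [H3 _]]. lia. }
  specialize (H0 d). lia.
Qed.

Definition climit : nat -> idx := fun n => sw_ (st (S n)) n.

Lemma climit_agree j n : (n < slen (st j))%nat -> climit n = sw_ (st j) n.
Proof.
  intro H. unfold climit. destruct (Nat.le_gt_cases (S n) j).
  - replace j with (S n + (j - S n))%nat by lia. rewrite st_agree; auto.
    pose proof (st_len (S n)). lia.
  - replace (S n) with (j + (S n - j))%nat by lia. apply st_agree; auto.
Qed.

Lemma climit_code : pi climit = x.
Proof.
  apply small_eq. intro j.
  pose proof (st_inv j) as HI. destruct (st j) as [[len w] y] eqn:Est. destruct HI as [Hy Hg].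
  destruct (notfin_ex y Hy) as [t Ht]. rewrite <- (Hg t Ht).
  eapply Rle_trans. apply (close_prefix _ _ len).
  - intros q Hq. rewrite (climit_agree j q); rewrite Est; simpl; auto.
    unfold glue. destruct (Nat.ltb_spec q len); [auto|lia].
  - apply pow_mono_le; [lra|]. pose proof (st_len j). rewrite Est in H. simpl in H. lia.
Qed.

Lemma climit_neq j : climit <> e j.
Proof.
  intro E. destruct (good_unfold _ _ _ (st_good j)) as [_ [_ [_ [P [HP HP2]]]]].
  apply HP2. rewrite <- E. symmetry. apply climit_agree. lia.
Qed.

End Diag.

Lemma no_aleph0 x : ~ U_aleph0 lam x.
Proof.
  intros [_ [e [He Hs]]].
  assert (Hx : NotFin x).
  { intros [l Hl].
    assert (Hnd : NoDup (map e (seq 0 (S (length l))))).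
    { apply NoDup_map_inj. apply seq_NoDup. intros; apply He; auto. }
    assert (Hle := @NoDup_incl_length _ _ l Hnd).
    rewrite length_map, length_seq in Hle. assert (S (length l) <= length l)%nat; [|lia].
    apply Hle. intros c Hc. apply in_map_iff in Hc. destruct Hc as [n [<- _]].
    apply Hl. symmetry. apply coding_iff. apply Hs. eauto. }
  assert (Hc : is_coding lam x (climit x e)).
  { apply coding_iff. symmetry. apply climit_code. auto. }
  apply Hs in Hc. destruct Hc as [n Hn]. apply (climit_neq x e Hx n). auto.
Qed.

Definition composeW (w : list idx) (y : R) : R := fold_right (fun a acc => ifs lam a acc) y w.

Lemma composeW_aff w y : composeW w y = composeW w 0 + lam ^ length w * y.
Proof.
  induction w; simpl. ring. unfold composeW in *. simpl. rewrite IHw, !ifs_eq. ring.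
Qed.

Lemma compose_W c n y : compose lam c n y = composeW (map c (seq 0 n)) y.
Proof.
  revert y. induction n; intro y. reflexivity.
  simpl compose. rewrite IHn. rewrite seq_S, map_app. unfold composeW. rewrite fold_right_app. reflexivity.
Qed.

Definition cyl (w : list idx) (z : R) : Prop := exists y, 0 <= y <= 1 /\ z = composeW w y.

Lemma cyl_diam w z z' : cyl w z -> cyl w z' -> Rabs (z - z') <= lam ^ length w.
Proof.
  intros [y [Hy ->]] [y' [Hy' ->]]. rewrite (composeW_aff w y), (composeW_aff w y').
  replace (composeW w 0 + lam ^ length w * y - (composeW w 0 + lam ^ length w * y'))
    with (lam ^ length w * (y - y')) by ring.
  rewrite Rabs_mult, (Rabs_right (lam ^ length w)) by (left; apply pow_lt; auto).
  assert (Rabs (y - y') <= 1) by (apply Rabs_le; lra).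
  pose proof (pow_lt lam (length w) Hl0). nra.
Qed.

Lemma pi_cyl c n : cyl (map c (seq 0 n)) (pi c).
Proof. exists (pi (shiftn n c)). split; [apply pi_01|]. rewrite (pi_split c n) at 1. apply compose_W. Qed.

Lemma U_codes k x : U lam k x -> exists c l, pi c = x /\ length l = k /\ NoDup l /\ (forall d, pi d = x <-> In d l).
Proof.
  intros [[c Hc] [l [Hlen [Hnd Hl]]]]. exists c, l. split; [symmetry; apply coding_iff; auto|].
  split; auto. split; auto. intro d. rewrite <- Hl. rewrite coding_iff. split; auto.
Qed.

Lemma Rpower_pow_base (x s : R) m : 0 < x -> Rpower (x ^ m) s = (Rpower x s) ^ m.
Proof.
  intro Hx. induction m.
  - simpl. unfold Rpower. rewrite ln_1, Rmult_0_r, exp_0. auto.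
  - simpl. rewrite <- Rpower_mult_distr; auto. rewrite IHm. auto. apply pow_lt; auto.
Qed.

Definition dimH : R := ln mu / (- ln lam).



Lemma ln_lam_neg : ln lam < 0.
Proof. rewrite <- ln_1. apply ln_increasing; lra. Qed.

Lemma dimH_pos : 0 < dimH.
Proof.
  unfold dimH. pose proof ln_lam_neg. assert (0 < ln mu).
  { rewrite <- ln_1. apply ln_increasing. lra. unfold mu. pose proof sqrt2_facts. lra. }
  apply Rdiv_lt_0_compat; lra.
Qed.

Lemma upper k s : dimH < s -> hausdorff_null s (U lam (2 ^ k)).
Proof.
  intro Hs. pose proof dimH_pos as Hd0. pose proof ln_lam_neg as Hln. pose proof sqrt2_facts as S2.
  assert (Hmu : 0 < mu) by (unfold mu; lra).
  set (q := Rpower lam s).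
  assert (Hq0 : 0 < q) by apply Rpower_pos.
  assert (Hmq : mu * q < 1).
  { unfold q, Rpower. rewrite <- (exp_ln mu) at 1 by auto. rewrite <- exp_plus. rewrite <- exp_0.
    apply exp_increasing. unfold dimH in Hs.
    assert (ln mu < s * (- ln lam)).
    { apply (Rmult_lt_compat_r (- ln lam)) in Hs; [|lra]. unfold Rdiv in Hs.
      rewrite Rmult_assoc, Rinv_l in Hs by lra. lra. }
    lra. }
  set (rho := (mu + / q) / 2).
  assert (Hiq : mu < / q).
  { apply (Rmult_lt_reg_r q); auto. rewrite Rinv_l by lra. lra. }
  assert (Hrho1 : mu < rho) by (unfold rho; lra).
  assert (Hrho2 : rho * q < 1).
  { unfold rho. assert (/ q * q = 1) by (apply Rinv_l; lra).
    replace ((mu + / q) / 2 * q) with ((mu * q + /q * q) / 2) by (unfold Rdiv; ring). lra. }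
  assert (Hrho3 : 3 <= rho) by (unfold mu in Hrho1; lra).
  assert (Hrr : 2 < (rho - 2) ^ 2).
  { unfold mu in Hrho1. simpl. nra. }
  set (eps0 := Rmin 1 (((rho - 2) ^ 2 - 2) / 2)).
  assert (He0 : 0 < eps0) by (unfold eps0; apply Rmin_glb_lt; lra).
  assert (He1 : eps0 <= 1) by apply Rmin_l.
  assert (He2 : 2 + 2 * eps0 <= (rho - 2) ^ 2) by (pose proof (Rmin_r 1 (((rho - 2) ^ 2 - 2) / 2)); unfold eps0 in *; lra).
  set (B := (2 ^ k)%nat).
  assert (HeB : 0 < eps0 ^ B) by (apply pow_lt; auto).
  assert (Hcount : forall n, INR (length (filter (fun w => Nat.leb (badw w) B) (allw (S n)))) <=
                     / eps0 ^ B * (2 * rho ^ (S n))).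
  { intro n. eapply Rle_trans.
    - apply (count_le _ (fun w => / eps0 ^ B * eps0 ^ badw w)).
      + intro w. assert (0 <= eps0 ^ badw w) by (apply pow_le; lra).
        assert (0 < / eps0 ^ B) by (apply Rinv_0_lt_compat; auto). nra.
      + intros w Hw. apply Nat.leb_le in Hw.
        assert (eps0 ^ B <= eps0 ^ badw w) by (apply pow_mono_le; [lra|auto]).
        apply (Rmult_le_reg_l (eps0 ^ B)); auto. rewrite <- Rmult_assoc, Rinv_r by lra. lra.
    - rewrite sumL_scale. apply Rmult_le_compat_l; [left; apply Rinv_0_lt_compat; auto|].
      rewrite sumL_allwS.
      pose proof (G_bound eps0 rho ltac:(lra) Hrho3 He2 n).
      assert (E : forall a, sumL (fun w => eps0 ^ badw (a :: w)) (allw n) <= rho ^ n * uu rho a) by auto.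
      pose proof (E I1) as E1. pose proof (E I2) as E2. pose proof (E I3) as E3. pose proof (E I4) as E4.
      simpl uu in E1, E2, E3, E4. rewrite <- tech_pow_Rmult. nra. }
  apply finite_cover_null; [lra|]. intros delta eps Hdelta Heps.
  destruct (pow_lt_1_zero (rho * q) ltac:(rewrite Rabs_right; nra) (eps * eps0 ^ B / 4) ltac:(apply Rdiv_lt_0_compat; [nra|lra]))
    as [N1 HN1].
  destruct (pow_lt_1_zero lam ltac:(rewrite Rabs_right; lra) delta Hdelta) as [N2 HN2].
  set (n := Nat.max N1 N2).
  set (L := filter (fun w => Nat.leb (badw w) B) (allw (S n))).
  exists (map cyl L), (lam ^ S n). split; [split|split; [|split]].
  - apply pow_lt; auto.
  - specialize (HN2 (S n) ltac:(lia)). rewrite Rabs_right in HN2 by (left; apply pow_lt; auto). lra.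
  - intros G z z' HG Hz Hz'. apply in_map_iff in HG. destruct HG as [w [<- Hw]].
    apply filter_In in Hw. destruct Hw as [Hw _]. rewrite <- (allw_len _ _ Hw). apply cyl_diam; auto.
  - intros x Hx. destruct (U_codes _ _ Hx) as [c [l [Hc [Hlen [Hnd Hl]]]]].
    exists (cyl (map c (seq 0 (S n)))). split.
    + apply in_map. apply filter_In. split.
      * apply allw_in. rewrite length_map, length_seq. auto.
      * apply Nat.leb_le. rewrite badw_seq. pose proof (bad_bound x l c n Hnd Hl Hc). unfold B. lia.
    + rewrite <- Hc. apply pi_cyl.
  - rewrite length_map. rewrite Rpower_pow_base by auto. fold q.
    eapply Rle_lt_trans. apply Rmult_le_compat_r. apply pow_le; lra. apply Hcount.
    specialize (HN1 (S n) ltac:(lia)). rewrite Rabs_right in HN1 by (left; apply pow_lt; nra).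
    rewrite Rpow_mult_distr in HN1.
    assert (0 < / eps0 ^ B) by (apply Rinv_0_lt_compat; auto).
    replace (/ eps0 ^ B * (2 * rho ^ S n) * q ^ S n) with (2 * / eps0 ^ B * (rho ^ S n * q ^ S n)) by ring.
    assert (rho ^ S n * q ^ S n < eps * eps0 ^ B / 4) by auto.
    apply (Rmult_lt_reg_l (eps0 ^ B)); auto.
    replace (eps0 ^ B * (2 * / eps0 ^ B * (rho ^ S n * q ^ S n))) with (2 * (rho ^ S n * q ^ S n)) by (field; lra).
    nra.
Qed.

Definition gg : R := lam * (1 - 5 * lam + lam ^ 2).

Lemma sep0 a b : PF a -> PF b -> a O <> b O -> gg <= Rabs (pi a - pi b).
Proof.
  intros Pa Pb Hne. unfold gg. apply gap_abs.
  assert (A : pi a = lam * pi (shift a) + tr (a O)) by apply pi_shift.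
  assert (B : pi (shift a) = lam * pi (shiftn 2 a) + tr (a 1%nat)) by (rewrite <- shift_shift; apply pi_shift).
  assert (A' : pi b = lam * pi (shift b) + tr (b O)) by apply pi_shift.
  assert (B' : pi (shift b) = lam * pi (shiftn 2 b) + tr (b 1%nat)) by (rewrite <- shift_shift; apply pi_shift).
  pose proof (pi_01 (shiftn 2 a)) as Z. pose proof (pi_01 (shiftn 2 b)) as Z'.
  assert (Y := pi_01 (shift a)). assert (Y' := pi_01 (shift b)).
  assert (Pa0 := Pa O). assert (Pb0 := Pb O).
  set (y := pi (shift a)) in *. set (y' := pi (shift b)) in *.
  set (z := pi (shiftn 2 a)) in *. set (z' := pi (shiftn 2 b)) in *.
  clearbody y y' z z'.
  assert (Ly : 0 <= lam * y <= lam) by nra. assert (Ly' : 0 <= lam * y' <= lam) by nra.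
  assert (Lz : 0 <= lam * z <= lam) by nra. assert (Lz' : 0 <= lam * z' <= lam) by nra.
  assert (L2 : 0 < lam ^ 2 < lam / 4) by nra.
  assert (L3 : lam * (1 - 5 * lam + lam ^ 2) <= lam * (1 - 3 * lam + lam ^ 2)) by nra.
  assert (L4 : lam * (1 - 5 * lam + lam ^ 2) <= 1 - 5 * lam + lam ^ 2) by nra.
  assert (L5 : lam * (1 - 5 * lam + lam ^ 2) <= lam) by nra.
  assert (T1 := tr_bounds (a 1%nat)). assert (T1' := tr_bounds (b 1%nat)).
  destruct (a O), (b O); try congruence; cbn [tr] in A, A';
  try (left; nra); try (right; nra).
  - destruct (a 1%nat); simpl in Pa0; try discriminate; cbn [tr] in B;
    (destruct (b 1%nat); simpl in Pb0; try discriminate; cbn [tr] in B'; right; nra).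
  - destruct (a 1%nat); simpl in Pa0; try discriminate; cbn [tr] in B;
    (destruct (b 1%nat); simpl in Pb0; try discriminate; cbn [tr] in B'; left; nra).
Qed.

Lemma PF_shiftn p u : PF u -> PF (shiftn p u).
Proof. intros H m. unfold shiftn. rewrite Nat.add_succ_r. apply H. Qed.

Lemma sep u u' p : PF u -> PF u' -> (forall q, (q < p)%nat -> u q = u' q) -> u p <> u' p ->
  gg * lam ^ p <= Rabs (pi u - pi u').
Proof.
  intros Pu Pu' Hq Hne.
  rewrite (pi_split u p), (pi_split u' p), (compose_ext u u' p _ Hq).
  rewrite (compose_aff u' p (pi (shiftn p u))), (compose_aff u' p (pi (shiftn p u'))).
  replace (compose lam u' p 0 + lam ^ p * pi (shiftn p u) - (compose lam u' p 0 + lam ^ p * pi (shiftn p u')))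
    with (lam ^ p * (pi (shiftn p u) - pi (shiftn p u'))) by ring.
  rewrite Rabs_mult, (Rabs_right (lam ^ p)) by (left; apply pow_lt; auto).
  rewrite Rmult_comm. apply Rmult_le_compat_l; [left; apply pow_lt; auto|].
  apply sep0; try apply PF_shiftn; auto. unfold shiftn. rewrite Nat.add_0_r. auto.
Qed.

Lemma pi_pre0 f a b t : pi (pre 0 f a b t) = lam * (lam * pi t + tr b) + tr a.
Proof.
  rewrite (pi_split _ 2), pre_shift. simpl compose.
  change (pre 0 f a b t 1%nat) with (pre 0 f a b t (S 0)). rewrite pre_n1, pre_n0, !ifs_eq. ring.
Qed.

Lemma cod24 t d : pi d = pi (pre 0 (fun _ => I1) I2 I4 t) <->
  exists t', pi t' = pi t /\ (d = pre 0 (fun _ => I1) I2 I4 t' \/ d = pre 0 (fun _ => I1) I3 I1 t').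
Proof.
  set (f := fun _ : nat => I1).
  assert (E := split_core (pi (pre 0 f I2 I4 t)) 0 (pre 0 f I2 I4 t) (pre 0 f I3 I1 t) eq_refl).
  assert (S1 : pi (pre 0 f I3 I1 t) = pi (pre 0 f I2 I4 t)) by (rewrite !pi_pre0; simpl; ring).
  assert (S2 : forall (d : nat -> idx) (q : nat),
     pi d = pi (pre 0 f I2 I4 t) -> (q < 0)%nat -> d q = pre 0 f I2 I4 t q) by (intros; lia).
  assert (S3 : pi (shiftn 2 (pre 0 f I2 I4 t)) = pi (shiftn 2 (pre 0 f I3 I1 t))) by (rewrite !pre_shift; auto).
  specialize (E S1 S2 (pre_n0 _ _ _ _ _) (pre_n1 _ _ _ _ _) (pre_n0 _ _ _ _ _) (pre_n1 _ _ _ _ _) S3 d).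
  rewrite E. rewrite pre_shift. split; intros [t' [H1 H2]]; exists t'; split; auto;
    rewrite ?(pre0_f (pre 0 f I2 I4 t) f) in *; rewrite ?(pre0_f f (pre 0 f I2 I4 t)) in *; auto.
Qed.

Lemma L24_spec b : PF b -> forall k, (forall d, pi d = pi (seq24 k b) <-> In d (L24 k b)) /\
  NoDup (L24 k b) /\ length (L24 k b) = (2 ^ k)%nat.
Proof.
  intros Pb k. induction k as [|k [IH1 [IH2 IH3]]].
  - simpl. split; [|split; [repeat constructor; auto|auto]].
    intro d. split.
    + intro H. left. symmetry. apply pf_unique; auto.
    + intros [<-|[]]. auto.
  - simpl seq24. simpl L24. split; [|split].
    + intro d. rewrite cod24, in_app_iff, !in_map_iff. split.
      * intros [t' [Et [-> | ->]]]; [left|right]; exists t'; split; auto; apply IH1; auto.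
      * intros [[t [<- Ht]]|[t [<- Ht]]]; exists t; (split; [apply IH1; auto|auto]).
    + apply NoDup_app.
      * apply NoDup_map_inj; auto. intros; eapply pre_inj; eauto.
      * apply NoDup_map_inj; auto. intros; eapply pre_inj; eauto.
      * intros a Ha Hb. apply in_map_iff in Ha, Hb. destruct Ha as [t [<- _]]. destruct Hb as [t' [E _]].
        symmetry in E. eapply pre_neq; eauto.
    + rewrite length_app, !length_map, IH3. simpl. lia.
Qed.

Lemma seq24_in_U b k : PF b -> U lam (2 ^ k) (pi (seq24 k b)).
Proof.
  intro Pb. destruct (L24_spec b Pb k) as [H1 [H2 H3]]. split.
  - exists (seq24 k b). apply coding_iff. auto.
  - exists (L24 k b). split; auto. split; auto. intro c. rewrite coding_iff, <- H1. split; auto.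
Qed.

Lemma seq24_diff b b' k : pi (seq24 k b) - pi (seq24 k b') = lam ^ (2 * k) * (pi b - pi b').
Proof.
  induction k. simpl. ring.
  simpl seq24. rewrite !pi_pre0. replace (2 * S k)%nat with (2 + 2 * k)%nat by lia. rewrite pow_add.
  transitivity (lam ^ 2 * (pi (seq24 k b) - pi (seq24 k b'))); [ring|]. rewrite IHk. ring.
Qed.

Lemma Rpower_lam_dim : Rpower lam dimH = / mu.
Proof.
  unfold Rpower, dimH. pose proof ln_lam_neg.
  replace (ln mu / - ln lam * ln lam) with (- ln mu) by (field; lra).
  rewrite exp_Ropp, exp_ln; auto. pose proof mu_pos; lra.
Qed.

Lemma Rpower_base_le1 (x a b : R) : 0 < x <= 1 -> a <= b -> Rpower x b <= Rpower x a.
Proof.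
  intros Hx Hab. unfold Rpower. apply exp_mono_le.
  assert (ln x <= 0). { destruct Hx as [H0 [H1|H1]]. left. rewrite <- ln_1. apply ln_increasing; lra. subst. rewrite ln_1. lra. }
  nra.
Qed.

Lemma lower k s : 0 < s -> s < dimH -> ~ hausdorff_null s (U lam (2 ^ k)).
Proof.
  intros Hs0 Hs Hnull.
  pose proof mu_pos as Hmu. pose proof sqrt2_facts as S2.
  assert (Hg : 0 < gg) by (unfold gg; nra).
  set (H := lam ^ (2 * k) * gg).
  assert (HH : 0 < H) by (unfold H; apply Rmult_lt_0_compat; [apply pow_lt|]; auto).
  set (C := Rpower (/ (H * lam)) s).
  assert (HC : 0 < C) by apply Rpower_pos.
  destruct (Hnull (H * lam) (/ (2 * C)) ltac:(nra) ltac:(apply Rinv_0_lt_compat; lra))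
    as [E [r [l [Hcov [Hr [Hdiam [Hsum Hl]]]]]]].
  set (X := fun b => pi (seq24 k b)).
  assert (Hsep : forall b b' p, PF b -> PF b' -> (forall q, (q < p)%nat -> b q = b' q) -> b p <> b' p ->
             H * lam ^ p <= Rabs (X b - X b')).
  { intros b b' p Pb Pb' Hq Hne. unfold X. rewrite seq24_diff, Rabs_mult.
    rewrite (Rabs_right (lam ^ (2 * k))) by (left; apply pow_lt; auto). unfold H. rewrite Rmult_assoc.
    apply Rmult_le_compat_l; [left; apply pow_lt; auto|]. apply sep; auto. }
  assert (HW : forall n, exists w, H * lam ^ S (length w) <= r n /\
             forall b, PF b -> E n (X b) -> w = map b (seq 0 (length w))).
  { intro n. destruct (Hr n) as [Hr0 Hr1].
    destruct (least_nat (fun J => H * lam ^ J <= r n)) as [J [HJ HJmin]].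
    { destruct (pow_lt_1_zero lam ltac:(rewrite Rabs_right; lra) (r n / H) ltac:(apply Rdiv_lt_0_compat; auto))
        as [N HN]. exists N. specialize (HN N (le_n _)). rewrite Rabs_right in HN by (left; apply pow_lt; auto).
      apply (Rmult_lt_compat_l H) in HN; auto. unfold Rdiv in HN. rewrite <- Rmult_assoc, (Rmult_comm H (r n)), Rmult_assoc, Rinv_r in HN by lra. lra. }
    destruct J as [|j]. { simpl in HJ. nra. }
    assert (Hj : r n < H * lam ^ j) by (apply Rnot_le_lt; apply HJmin; lia).
    destruct (classic (exists b0, PF b0 /\ E n (X b0))) as [[b0 [Pb0 Eb0]]|Hno].
    - exists (map b0 (seq 0 j)). rewrite length_map, length_seq. split; auto.
      intros b Pb Eb. apply map_ext_in. intros i Hi. apply in_seq in Hi.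
      destruct (idx_eq_dec (b0 i) (b i)) as [e|ne]; auto. exfalso.
      destruct (least_diff b0 b) as [p [Hp1 Hp2]]; [eauto|].
      assert (p <= i)%nat. { destruct (Nat.le_gt_cases p i); auto. exfalso. apply ne. apply Hp2. auto. }
      pose proof (Hsep b0 b p Pb0 Pb Hp2 Hp1).
      pose proof (Hdiam n _ _ Eb0 Eb).
      assert (lam ^ j <= lam ^ p) by (apply pow_mono_le; [lra|lia]).
      assert (H * lam ^ j <= H * lam ^ p) by (apply Rmult_le_compat_l; lra). lra.
    - exists (map (fun _ => I1) (seq 0 j)). rewrite length_map, length_seq. split; auto.
      intros b Pb Eb. exfalso. apply Hno. eauto. }
  set (W := fun n => proj1_sig (constructive_indefinite_description _ (HW n))).
  assert (HWs : forall n, H * lam ^ S (length (W n)) <= r n /\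
             forall b, PF b -> E n (X b) -> W n = map b (seq 0 (length (W n)))).
  { intro n. unfold W. destruct (constructive_indefinite_description _ _). simpl. auto. }
  destruct (kraft W) as [M HM].
  { intros b Pb. destruct (Hcov (X b) (seq24_in_U b k Pb)) as [n Hn]. exists n. apply HWs; auto. }
  assert (Hmass : forall n, mass (W n) <= sqrt 2 * C * Rpower (r n) s).
  { intro n. destruct (HWs n) as [H1 _]. destruct (Hr n) as [Hr0 Hr1].
    set (j := length (W n)) in *.
    assert (Hmw : mass (W n) <= sqrt 2 * Rpower (lam ^ j) dimH).
    { unfold mass. fold j. rewrite Rpower_pow_base, Rpower_lam_dim by auto. rewrite pow_inv.
      pose proof (V_pos (last (W n) I1)). unfold Rdiv. apply Rmult_le_compat_r; [|lra].
      left. apply Rinv_0_lt_compat, pow_lt. lra. }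
    set (t := r n * / (H * lam)).
    assert (Ht1 : lam ^ j <= t).
    { unfold t. apply (Rmult_le_reg_r (H * lam)); [nra|]. rewrite Rmult_assoc, Rinv_l by nra.
      rewrite Rmult_1_r. simpl pow in H1. lra. }
    assert (Ht2 : t <= 1).
    { unfold t. apply (Rmult_le_reg_r (H * lam)); [nra|]. rewrite Rmult_assoc, Rinv_l by nra. lra. }
    assert (Hlj : 0 < lam ^ j) by (apply pow_lt; auto).
    assert (E1 : Rpower (lam ^ j) dimH <= Rpower t dimH).
    { apply Rle_Rpower_l; [pose proof dimH_pos; lra| lra]. }
    assert (E2 : Rpower t dimH <= Rpower t s) by (apply Rpower_base_le1; lra).
    assert (E3 : Rpower t s = Rpower (r n) s * C).
    { unfold t, C. rewrite Rpower_mult_distr; auto. apply Rinv_0_lt_compat. nra. }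
    nra. }
  assert (Hfs : forall M, fs W (S M) nil <= sqrt 2 * C * sum_f_R0 (fun n => Rpower (r n) s) M).
  { assert (Hf : forall n, fm (W n) nil = mass (W n)).
    { intro n. unfold fm. destruct (excluded_middle_informative _) as [Hp|N].
      - destruct Hp as [Hp _]. simpl in Hp. destruct (W n); [auto|simpl in Hp; lia].
      - destruct (excluded_middle_informative _) as [_|N2]; auto. exfalso; apply N2, pref_nil. }
    induction M0.
    - simpl. rewrite Hf. specialize (Hmass O). lra.
    - change (fs W (S (S M0)) nil) with (fs W (S M0) nil + fm (W (S M0)) nil).
      rewrite Hf, tech5. specialize (Hmass (S M0)). nra. }
  assert (Hpart : sum_f_R0 (fun n => Rpower (r n) s) M <= l).
  { apply growing_ineq; [|exact Hsum]. intro n. simpl. pose proof (Rpower_pos (r (S n)) s). lra. }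
  pose proof (fs_mono W M (S M) nil ltac:(lia)).
  pose proof (Hfs M).
  assert (Hfin : sqrt 2 * C * l < sqrt 2 * C * / (2 * C)) by (apply Rmult_lt_compat_l; nra).
  replace (sqrt 2 * C * / (2 * C)) with (sqrt 2 / 2) in Hfin by (field; lra).
  assert (sqrt 2 * C * sum_f_R0 (fun n => Rpower (r n) s) M <= sqrt 2 * C * l)
    by (apply Rmult_le_compat_l; nra).
  lra.
Qed.

End Main.

Lemma dim_k (lam : R) (hlam0 : 0 < lam) (hlam1 : lam < (5 - sqrt 21) / 2) (k : nat) :
  hausdorff_dim (U lam (2 ^ k)) (ln (2 + sqrt 2) / (- ln lam)).
Proof.
  destruct (lam_facts lam hlam0 hlam1) as [H1 H2].
  change (ln (2 + sqrt 2) / (- ln lam)) with (dimH lam).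
  pose proof (dimH_pos lam hlam0 H1) as Hd.
  split.
  - intros s [Hs Hn]. destruct (Rle_lt_dec (dimH lam) s) as [h|h]; auto.
    exfalso. exact (lower lam hlam0 H1 H2 k s Hs h Hn).
  - intros m' Hm. destruct (Rle_lt_dec m' (dimH lam)) as [h|h]; auto.
    exfalso. set (s := (dimH lam + m') / 2).
    assert (m' <= s). { apply Hm. split; [unfold s; lra|]. apply upper; auto; unfold s; lra. }
    unfold s in H. lra.
Qed.

Theorem theorem2p23 (lam : R) (hlam0 : 0 < lam) (hlam1 : lam < (5 - sqrt 21) / 2) :
  (forall k : nat, (1 <= k)%nat ->
     hausdorff_dim (U lam (2 ^ k)) (ln (2 + sqrt 2) / (- ln lam)) /\
     hausdorff_dim (U lam 1%nat) (ln (2 + sqrt 2) / (- ln lam))) /\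
  (forall i : nat, (1 <= i)%nat -> ~ (exists k : nat, i = (2 ^ k)%nat) ->
     forall x : R, ~ U lam i x) /\
  (forall x : R, ~ U_aleph0 lam x).
Proof.
  destruct (lam_facts lam hlam0 hlam1) as [H1 H2].
  split; [|split].
  - intros k _. split; [apply dim_k; auto|]. apply (dim_k lam hlam0 hlam1 0).
  - intros i Hi Hnp x Hx. apply Hnp.
    destruct (U_codes lam hlam0 H1 H2 i x Hx) as [c [l [Hc [Hlen [Hnd Hl]]]]].
    eapply count_pow2; eauto.
  - intros x. apply no_aleph0; auto.
Qed.
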